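(* In an $a^2bc$-tiling, every vertex of degree $3$ is one of $\alpha^3$, $\alpha\beta^2$, $\alpha\gamma^2$, $\beta\gamma\delta$.
   Context: An $a^2bc$-quadrilateral is a simple spherical quadrilateral with edges $a,a,b,c$ in cyclic order, $a,b,c$ pairwise distinct; $\alpha$ = angle between the two $a$-edges; $\beta$ = angle between an $a$-edge and the $b$-edge; $\delta$ = angle between the $b$-edge and the $c$-edge; $\gamma$ = angle between the $c$-edge and an $a$-edge. An $a^2bc$-tiling is an edge-to-edge tiling of the sphere by congruent copies of such a quadrilateral with all vertices of degree $\ge3$. A vertex $\alpha^k\beta^l\gamma^m\delta^n$ has exactly $k$ copies of $\alpha$, etc. *)

(* Defs.v *)
(* Combinatorial (dart / rotation-system) model of an
   edge-to-edge tiling of the sphere by congruent a^2bc-quadrilaterals. *)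
From HB Require Import structures.
From mathcomp Require Import all_boot all_order all_algebra all_fingroup.
Set Implicit Arguments.
Unset Strict Implicit.
Unset Printing Implicit Defensive.
Import Order.TTheory GRing.Theory Num.Theory.

(* The four angles (corners) of the quadrilateral Q with edges a,a,b,c in
   cyclic order: alpha between the two a-edges, beta between an a-edge and
   the b-edge, delta between the b-edge and the c-edge, gamma between the
   c-edge and an a-edge. *)
Inductive angle := alpha | beta | gamma | delta.

Definition angle_eqb (x y : angle) : bool :=
  match x, y with
  | alpha, alpha | beta, beta | gamma, gamma | delta, delta => true
  | _, _ => false
  end.

Lemma angle_eqP : Equality.axiom angle_eqb.
Proof. by case; case; constructor. Qed.

HB.instance Definition _ := hasDecEq.Build angle angle_eqP.

Definition qadj (x y : angle) : bool :=
  match x, y with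
  | alpha, beta | beta, alpha | beta, delta | delta, beta
  | delta, gamma | gamma, delta | gamma, alpha | alpha, gamma => true
  | _, _ => false
  end.

Definition qlen (R : Type) (a b c : R) (x y : angle) : R :=
  match x, y with
  | alpha, beta | beta, alpha => a
  | beta, delta | delta, beta => b
  | delta, gamma | gamma, delta => c
  | gamma, alpha | alpha, gamma => a
  | _, _ => a (* irrelevant: non-adjacent corners *)
  end.

Local Open Scope group_scope.

(* Darts D; [s] = rotation around vertices (vertices = s-orbits),
   [e] = fixed-point-free involution (edges = e-orbits),
   faces = orbits of f := e * s  (f x = s (e x)).
   The dart y is identified with the corner at the vertex of y lying between
   the edges of (s^-1 y) and y; this corner belongs to the face of y, and the
   edge of y joins the corners y and f y of that face.
   [ang y] = corner of Q to which the tile-corner y corresponds under the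
   congruence of the tile with Q; [len y] = length of the edge of y. *)
Definition a2bc_tiling (R : realFieldType) (D : finType) (s e : {perm D})
    (ang : D -> angle) (len : D -> R) (a b c : R) : Prop :=
  ((0 < a)%R /\ (0 < b)%R /\ (0 < c)%R) /\
      (a != b /\ b != c /\ a != c) /\
      (forall x, e (e x) = x /\ e x != x) /\
      (forall x, len (e x) = len x) /\
      (* every tile is a quadrilateral congruent to Q: its four corners are
         matched bijectively with the corners of Q, preserving adjacency,
         and each edge has the length of the corresponding edge of Q *)
      (forall x, ((e * s) ^+ 4) x = x
                 /\ uniq [:: ang x; ang ((e * s) x); ang (((e * s) ^+ 2) x);
                             ang (((e * s) ^+ 3) x)]
                 /\ qadj (ang x) (ang ((e * s) x))
                 /\ len x = qlen a b c (ang x) (ang ((e * s) x))) /\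
      (forall x, 3 <= #|porbit s x|)%N /\
      (* the map is connected and of genus 0 (a tiling of the sphere) *)
      (forall x y, exists g, g \in <<[set s; e]>> /\ g x = y)
      /\ (#|porbits s| + #|porbits (e * s)| = #|porbits e| + 2)%N.

Definition nang (D : finType) (s : {perm D}) (ang : D -> angle) (x : D)
    (X : angle) : nat :=
  #|[set y in porbit s x | ang y == X]|.

(* vertex type alpha^k beta^l gamma^m delta^n, as (k, l, m, n) *)
Definition vtype (D : finType) (s : {perm D}) (ang : D -> angle) (x : D)
    : nat * nat * nat * nat :=
  (nang s ang x alpha, nang s ang x beta, nang s ang x gamma, nang s ang x delta).

(* Main.v *)
Require Import Defs.
From HB Require Import structures.
From mathcomp Require Import all_boot all_order all_algebra all_fingroup.

Lemma corner_lens (R : Type) (a b c : R) (u X v : angle) :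
  qadj u X -> qadj X v -> u != v ->
  (X = alpha -> qlen a b c u X = a /\ qlen a b c X v = a) /\
  (X = beta -> (qlen a b c u X = a /\ qlen a b c X v = b) \/
               (qlen a b c u X = b /\ qlen a b c X v = a)) /\
  (X = gamma -> (qlen a b c u X = a /\ qlen a b c X v = c) \/
               (qlen a b c u X = c /\ qlen a b c X v = a)) /\
  (X = delta -> (qlen a b c u X = b /\ qlen a b c X v = c) \/
               (qlen a b c u X = c /\ qlen a b c X v = b)).
Proof. by case: u; case: X; case: v => //=; intuition discriminate. Qed.

Lemma nang3 (D : finType) (s : {perm D}) (ang : D -> angle) (x : D) X :
  #|porbit s x| = 3 ->
  nang s ang x X = count (fun y => ang y == X) [:: x; s x; s (s x)].
Proof.
move=> H3; rewrite /nang.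
have U := uniq_traject_porbit s x; rewrite H3 in U.
have -> : [set y in porbit s x | ang y == X] =
          [set y in [seq y <- traject s x 3 | ang y == X]].
  by apply/setP=> y; rewrite !inE mem_filter porbit_traject H3 andbC.
by rewrite cardsE (card_uniqP _) ?filter_uniq // size_filter.
Qed.

Theorem lemma9 (R : realFieldType) (D : finType) (s e : {perm D})
    (ang : D -> angle) (len : D -> R) (a b c : R) :
  a2bc_tiling s e ang len a b c ->
  forall x : D, #|porbit s x| = 3%N ->
    vtype s ang x = (3, 0, 0, 0)%N      (* alpha^3 *)
    \/ vtype s ang x = (1, 2, 0, 0)%N   (* alpha beta^2 *)
    \/ vtype s ang x = (1, 0, 2, 0)%N   (* alpha gamma^2 *)
    \/ vtype s ang x = (0, 1, 1, 1)%N.  (* beta gamma delta *)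
Proof.
move=> [_ [[nab [nbc nac]] [He [Hlen [Hf _]]]]] x H3.
have key : forall z, exists u v, qadj u (ang (s z)) /\ qadj (ang (s z)) v /\
    u != v /\ len z = qlen a b c u (ang (s z)) /\
    len (s z) = qlen a b c (ang (s z)) v.
  move=> z.
  have fez : (e * s)%g (e z) = s z by rewrite permM (He z).1.
  have [_ [Hu [Hq1 Hl1]]] := Hf (e z).
  have [_ [_ [Hq2 Hl2]]] := Hf (s z).
  exists (ang (e z)), (ang ((e * s)%g (s z))).
  rewrite fez in Hu Hq1 Hl1.
  split=> //; split=> //; split.
    have f2 : ((e * s) ^+ 2)%g (e z) = (e * s)%g (s z).
      by rewrite expgS expg1 !permM (He z).1.
    move: Hu; rewrite /= !inE f2.
    by case/andP=> /norP[_ /norP[]].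
  by rewrite -Hlen Hl1.
have s3 : s (s (s x)) = x.
  by have := iter_porbit s x; rewrite H3.
have [u0 [v0 [q0 [q0' [n0 [l0 l0']]]]]] := key x.
have [u1 [v1 [q1 [q1' [n1 [l1 l1']]]]]] := key (s x).
have [u2 [v2 [q2 [q2' [n2 [l2 l2']]]]]] := key (s (s x)).
rewrite s3 in l2 l2' q2 q2'.
have C0 := @corner_lens _ a b c _ _ _ q0 q0' n0.
have C1 := @corner_lens _ a b c _ _ _ q1 q1' n1.
have C2 := @corner_lens _ a b c _ _ _ q2 q2' n2.
rewrite /vtype !(@nang3 _ _ _ _ _ H3) /=.
rewrite -l0 -l0' in C0; rewrite -l1 -l1' in C1; rewrite -l2 -l2' in C2.
move: C0 C1 C2.
move/eqP: nab => nab; move/eqP: nbc => nbc; move/eqP: nac => nac.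
case: (ang x); case: (ang (s x)); case: (ang (s (s x))) => /=;
  move=> [A0 [B0 [G0 D0]]] [A1 [B1 [G1 D1]]] [A2 [B2 [G2 D2]]];
  first [ by auto 6 |
  try specialize (A0 erefl); try specialize (B0 erefl);
  try specialize (G0 erefl); try specialize (D0 erefl);
  try specialize (A1 erefl); try specialize (B1 erefl);
  try specialize (G1 erefl); try specialize (D1 erefl);
  try specialize (A2 erefl); try specialize (B2 erefl);
  try specialize (G2 erefl); try specialize (D2 erefl);
  exfalso; intuition congruence ].
Qed.
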